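(* Let $L$ be a finite-dimensional nilpotent Lie superalgebra with $\dim L'=(r\mid s)$ where $r+s=1$, and suppose $\dim_{\mathbb{F}} L/Z(L)>2$ (total dimension). Then $L$ is not capable.
   Context: All algebras are over a field $\mathbb{F}$ of characteristic $\neq 2,3$. $L'=[L,L]$, $Z(L)$ is the center, $\dim L=(m\mid n)$ means even part of dimension $m$ and odd part of dimension $n$. A Lie superalgebra $L$ is capable if $L\cong H/Z(H)$ for some Lie superalgebra $H$. *)

(* Defs.v *)
From HB Require Import structures.
From mathcomp Require Import all_boot all_order all_algebra.
Set Implicit Arguments. Unset Strict Implicit. Unset Printing Implicit Defensive.
Import GRing.Theory.
Local Open Scope ring_scope.

(* A super vector space over F is represented as V0 * V1 (even part V0,
   odd part V1).  An element x is homogeneous of degree b (false = even,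
   true = odd) when its component of the other parity vanishes. *)
Definition homog (F : fieldType) (V0 V1 : lmodType F) (b : bool) (x : V0 * V1) : bool :=
  if b then x.1 == 0 else x.2 == 0.

Record is_lie_superalgebra (F : fieldType) (V0 V1 : lmodType F)
    (br : V0 * V1 -> V0 * V1 -> V0 * V1) : Prop := {
  br_linl : forall (a : F) x y z, br (a *: x + y) z = a *: br x z + br y z;
  br_linr : forall (a : F) x y z, br z (a *: x + y) = a *: br z x + br z y;
  br_grade : forall a b x y, homog a x -> homog b y -> homog (a (+) b) (br x y);
  br_superanti : forall a b x y, homog a x -> homog b y ->
     br x y = - (((-1 : F) ^+ (a && b)) *: br y x);
  br_superjacobi : forall a b c x y z, homog a x -> homog b y -> homog c z ->
     ((-1 : F) ^+ (a && c)) *: br x (br y z)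
   + ((-1 : F) ^+ (b && a)) *: br y (br z x)
   + ((-1 : F) ^+ (c && b)) *: br z (br x y) = 0
}.

Section FinDim.
Variables (F : fieldType) (V0 V1 : vectType F).
Variable br : V0 * V1 -> V0 * V1 -> V0 * V1.

Definition even_part : {vspace V0 * V1} := lker (linfun (fun x : V0 * V1 => x.2)).
Definition odd_part : {vspace V0 * V1} := lker (linfun (fun x : V0 * V1 => x.1)).

Fixpoint lcs (k : nat) : {vspace V0 * V1} :=
  match k with
  | 0 => fullv
  | k'.+1 => (<< [seq br x y | x <- vbasis (lcs k'), y <- vbasis fullv] >>)%VS
  end.

Definition derived : {vspace V0 * V1} := lcs 1.

Definition nilpotent : Prop := exists k, lcs k = 0%VS.

Definition centre : {vspace V0 * V1} :=
  (\bigcap_(i < \dim (fullv : {vspace V0 * V1}))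
      lker (linfun (fun x => br x (tnth (vbasis fullv) i))))%VS.

End FinDim.

(* L is capable: L is isomorphic to H / Z(H) for some Lie superalgebra H
   (arbitrary, possibly infinite-dimensional), expressed via the first
   isomorphism theorem: an even surjective homomorphism H -> L with kernel Z(H). *)
Definition capable (F : fieldType) (V0 V1 : lmodType F)
    (br : V0 * V1 -> V0 * V1 -> V0 * V1) : Prop :=
  exists (H0 H1 : lmodType F) (brH : H0 * H1 -> H0 * H1 -> H0 * H1)
         (f : H0 * H1 -> V0 * V1),
    is_lie_superalgebra brH /\
    [/\ (forall (a : F) x y, f (a *: x + y) = a *: f x + f y),
        (forall b x, homog b x -> homog b (f x)),
        (forall x y, f (brH x y) = br (f x) (f y)),
        (forall v, exists h, f h = v)
      & (forall h, f h = 0 <-> (forall k, brH h k = 0))].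

(* Main.v *)
Require Import Defs.
From HB Require Import structures.
From mathcomp Require Import all_boot all_order all_algebra.
From Stdlib Require Import Classical.
From mathcomp Require Import zify.
Set Implicit Arguments. Unset Strict Implicit. Unset Printing Implicit Defensive.
Import GRing.Theory.
Local Open Scope ring_scope.

Section Lin.
Variables (F : fieldType) (U V : lmodType F) (g : U -> V).
Hypothesis Hg : forall (a : F) x y, g (a *: x + y) = a *: g x + g y.
Lemma linD x y : g (x + y) = g x + g y.
Proof. by have := Hg 1 x y; rewrite !scale1r. Qed.
Lemma lin0 : g 0 = 0.
Proof. by apply: (addrI (g 0)); rewrite -linD !addr0. Qed.
Lemma linZ a x : g (a *: x) = a *: g x.
Proof. by have := Hg a x 0; rewrite !addr0 lin0 addr0. Qed.
Lemma linN x : g (- x) = - g x.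
Proof. by rewrite -scaleN1r linZ scaleN1r. Qed.
Lemma linB x y : g (x - y) = g x - g y.
Proof. by rewrite linD linN. Qed.
End Lin.

Definition Ep (F : fieldType) (V0 V1 : lmodType F) (x : V0 * V1) : V0 * V1 := (x.1, 0).
Definition Op (F : fieldType) (V0 V1 : lmodType F) (x : V0 * V1) : V0 * V1 := (0, x.2).

Section Gen.
Variables (F : fieldType) (V0 V1 : lmodType F).
Implicit Types x y z : V0 * V1.

Lemma pair_split x : x = Ep x + Op x.
Proof. by case: x => a b; rewrite /Ep /Op /GRing.add /=; congr pair; rewrite ?addr0 ?add0r. Qed.

Lemma homogE x : homog false (Ep x). Proof. by rewrite /homog /Ep /=. Qed.
Lemma homogO x : homog true (Op x). Proof. by rewrite /homog /Op /=. Qed.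

Lemma homog_add0 b x y : homog b x -> homog (~~ b) y -> x + y = 0 -> x = 0.
Proof.
case: x y => [x1 x2] [y1 y2]; case: b; rewrite /homog /= => /eqP hx /eqP hy [] h1 h2.
- by rewrite hx; rewrite hy addr0 in h2; rewrite h2.
- by rewrite hx; rewrite hy addr0 in h1; rewrite h1.
Qed.

Lemma homog_add0' b x y : homog b x -> homog (~~ b) y -> x + y = 0 -> y = 0.
Proof.
move=> hx hy h; apply: (homog_add0 (b := ~~ b) (x := y) (y := x)) => //.
  by rewrite negbK.
by rewrite addrC.
Qed.

Variable br : V0 * V1 -> V0 * V1 -> V0 * V1.
Hypothesis Hl : is_lie_superalgebra br.

Lemma brDl x y z : br (x + y) z = br x z + br y z.
Proof. exact: (linD (g := br^~ z) (fun a x y => br_linl Hl a x y z)). Qed.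
Lemma brDr x y z : br z (x + y) = br z x + br z y.
Proof. exact: (linD (g := br z) (fun a x y => br_linr Hl a x y z)). Qed.
Lemma br0l z : br 0 z = 0.
Proof. exact: (lin0 (g := br^~ z) (fun a x y => br_linl Hl a x y z)). Qed.
Lemma br0r z : br z 0 = 0.
Proof. exact: (lin0 (g := br z) (fun a x y => br_linr Hl a x y z)). Qed.
Lemma brZr a x z : br z (a *: x) = a *: br z x.
Proof. exact: (linZ (g := br z) (fun a x y => br_linr Hl a x y z)). Qed.
Lemma brBl x y z : br (x - y) z = br x z - br y z.
Proof. exact: (linB (g := br^~ z) (fun a x y => br_linl Hl a x y z)). Qed.

Lemma br_anti0 a b x y : homog a x -> homog b y -> br x y = 0 -> br y x = 0.
Proof.
move=> hx hy h; have := br_superanti Hl hy hx; by rewrite h scaler0 oppr0.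
Qed.

Lemma brE x y : br x y = br (Ep x) (Ep y) + br (Ep x) (Op y) + br (Op x) (Ep y) + br (Op x) (Op y).
Proof.
by rewrite {1}(pair_split x) {1}(pair_split y) brDl !brDr !addrA.
Qed.

Definition centralH c := forall h, br c h = 0.

Lemma homog_ker g kb a : homog g kb -> br kb a = 0 -> br kb (Ep a) = 0 /\ br kb (Op a) = 0.
Proof.
move=> hk h; rewrite (pair_split a) brDr in h.
have h1 := br_grade Hl hk (homogE a); have h2 := br_grade Hl hk (homogO a).
rewrite addbF in h1; rewrite addbT in h2.
split; [exact: homog_add0 h1 h2 h | exact: homog_add0' h1 h2 h].
Qed.

Lemma homog_kerl g kb a : homog g kb -> br a kb = 0 -> br (Ep a) kb = 0 /\ br (Op a) kb = 0.
Proof.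
move=> hk h; rewrite (pair_split a) brDl in h.
have h1 := br_grade Hl (homogE a) hk; have h2 := br_grade Hl (homogO a) hk.
rewrite addFb in h1.
have h2' : homog (~~ g) (br (Op a) kb) by rewrite -addTb.
split; [exact: homog_add0 h1 h2' h | exact: homog_add0' h1 h2' h].
Qed.

Lemma central_parts c : centralH c -> centralH (Ep c) /\ centralH (Op c).
Proof.
move=> hc.
have hh : forall h, br (Ep c) h = 0 /\ br (Op c) h = 0.
  move=> h; rewrite (pair_split h) !brDr.
  have [e1 e2] := homog_kerl (homogE h) (hc (Ep h)).
  have [o1 o2] := homog_kerl (homogO h) (hc (Op h)).
  by rewrite e1 e2 o1 o2 !addr0.
by split=> h; have [] := hh h.
Qed.

Lemma central_r c k : centralH c -> br k c = 0.
Proof.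
move=> hc; have [he ho] := central_parts hc.
rewrite (pair_split c) (pair_split k) !brDr !brDl.
rewrite (br_anti0 (homogE c) (homogE k) (he _)).
rewrite (br_anti0 (homogE c) (homogO k) (he _)).
rewrite (br_anti0 (homogO c) (homogE k) (ho _)).
by rewrite (br_anti0 (homogO c) (homogO k) (ho _)) !addr0.
Qed.

Lemma central_homog c : (forall b k, homog b k -> br c k = 0) -> centralH c.
Proof.
move=> h k; rewrite (pair_split k) brDr (h _ _ (homogE k)) (h _ _ (homogO k)).
by rewrite addr0.
Qed.

Lemma split_nonzero a b : br a b != 0 ->
  exists al be a' b', [/\ homog al a', homog be b', a' = Ep a \/ a' = Op a,
                          b' = Ep b \/ b' = Op b & br a' b' != 0].
Proof.
rewrite brE.
have [h1|h1] := eqVneq (br (Ep a) (Ep b)) 0; last first.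
  by move=> _; exists false, false, (Ep a), (Ep b); split; rewrite ?homogE; auto.
have [h2|h2] := eqVneq (br (Ep a) (Op b)) 0; last first.
  by move=> _; exists false, true, (Ep a), (Op b); split; rewrite ?homogE ?homogO; auto.
have [h3|h3] := eqVneq (br (Op a) (Ep b)) 0; last first.
  by move=> _; exists true, false, (Op a), (Ep b); split; rewrite ?homogE ?homogO; auto.
have [h4|h4] := eqVneq (br (Op a) (Op b)) 0; last first.
  by move=> _; exists true, true, (Op a), (Op b); split; rewrite ?homogE ?homogO; auto.
by rewrite h1 h2 h3 h4 !addr0 eqxx.
Qed.

End Gen.

Section EpOp.
Variables (F : fieldType) (V0 V1 : lmodType F).
Implicit Types u w : V0 * V1.
Lemma EpD u w : Ep (u + w) = Ep u + Ep w.
Proof. by rewrite /Ep /GRing.add /=; congr pair; rewrite addr0. Qed.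
Lemma OpD u w : Op (u + w) = Op u + Op w.
Proof. by rewrite /Op /GRing.add /=; congr pair; rewrite addr0. Qed.
Lemma Ep_even u : homog false u -> Ep u = u.
Proof. by case: u => a b; rewrite /homog /Ep /= => /eqP ->. Qed.
Lemma Ep_odd u : homog true u -> Ep u = 0.
Proof. by case: u => a b; rewrite /homog /Ep /= => /eqP ->. Qed.
Lemma Op_even u : homog false u -> Op u = 0.
Proof. by case: u => a b; rewrite /homog /Op /= => /eqP ->. Qed.
Lemma Op_odd u : homog true u -> Op u = u.
Proof. by case: u => a b; rewrite /homog /Op /= => /eqP ->. Qed.
End EpOp.

Lemma linfunE (F : fieldType) (aT rT : vectType F) (f : aT -> rT) :
  (forall (a : F) x y, f (a *: x + y) = a *: f x + f y) -> linfun f =1 f.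
Proof.
move=> Hf.
pose g : {linear aT -> rT} := HB.pack f (GRing.isLinear.Build _ _ _ _ f Hf).
exact: (lfunE g).
Qed.

Section Fin.
Variables (F : fieldType) (V0 V1 : vectType F).
Variable br : V0 * V1 -> V0 * V1 -> V0 * V1.
Hypothesis Hl : is_lie_superalgebra br.

Definition adl x : 'End((V0 * V1)%type) := linfun (br x).
Definition adr x : 'End((V0 * V1)%type) := linfun (br^~ x).
Lemma adlE x y : adl x y = br x y.
Proof. exact: (linfunE (fun a u v => br_linr Hl a u v x)). Qed.
Lemma adrE x y : adr x y = br y x.
Proof. exact: (linfunE (fun a u v => br_linl Hl a u v x)). Qed.

Lemma mem_derived x y : br x y \in derived br.
Proof.
rewrite (coord_vbasis (memvf x)) -adrE raddf_sum /=.
apply: memv_suml => i _; rewrite linearZ /= adrE; apply: memvZ.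
rewrite (coord_vbasis (memvf y)) -adlE raddf_sum /=.
apply: memv_suml => j _; rewrite linearZ /= adlE; apply: memvZ.
rewrite /derived /=; apply: memv_span; apply: allpairs_f; apply: mem_nth;
  by rewrite size_tuple.
Qed.

Lemma derived_sub (U : {vspace V0 * V1}) : (forall x y, br x y \in U) -> (derived br <= U)%VS.
Proof.
move=> h; rewrite /derived /=; apply/span_subvP => v /allpairsP [[x y] [_ _ ->]].
exact: h.
Qed.

Lemma mem_even v : Ep v \in even_part V0 V1.
Proof. by rewrite memv_ker linfunE. Qed.
Lemma mem_odd v : Op v \in odd_part V0 V1.
Proof. by rewrite memv_ker linfunE. Qed.

Lemma dim_derived :
  (\dim (derived br) <= \dim (derived br :&: even_part V0 V1) + \dim (derived br :&: odd_part V0 V1))%N.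
Proof.
set D := derived br.
have sub : (D <= (D :&: even_part V0 V1) + (D :&: odd_part V0 V1))%VS.
  apply: derived_sub => x y.
  rewrite (pair_split (br x y)); apply: memv_add.
  - have g1 := br_grade Hl (homogE x) (homogE y).
    have g2 := br_grade Hl (homogE x) (homogO y).
    have g3 := br_grade Hl (homogO x) (homogE y).
    have g4 := br_grade Hl (homogO x) (homogO y).
    rewrite memv_cap mem_even andbT (brE Hl x y) !EpD.
    rewrite (Ep_even g1) (Ep_odd g2) (Ep_odd g3) (Ep_even g4).
    by rewrite !addr0; apply: memvD; apply: mem_derived.
  - have g1 := br_grade Hl (homogE x) (homogE y).
    have g2 := br_grade Hl (homogE x) (homogO y).
    have g3 := br_grade Hl (homogO x) (homogE y).
    have g4 := br_grade Hl (homogO x) (homogO y).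
    rewrite memv_cap mem_odd andbT (brE Hl x y) !OpD.
    rewrite (Op_even g1) (Op_odd g2) (Op_odd g3) (Op_even g4).
    by rewrite add0r addr0; apply: memvD; apply: mem_derived.
have := dimvS sub; have := dimv_sum_cap (D :&: even_part V0 V1) (D :&: odd_part V0 V1).
lia.
Qed.

Lemma centre_mem x : (forall y, br x y = 0) -> x \in centre br.
Proof.
move=> h; rewrite /centre memvE; apply/subv_bigcapP => i _.
by rewrite -memvE memv_ker linfunE ?h // => a u v; apply: br_linl.
Qed.

End Fin.

Section LemA.
Variables (F : fieldType) (V0 V1 : vectType F).
Variable br : V0 * V1 -> V0 * V1 -> V0 * V1.
Hypothesis Hl : is_lie_superalgebra br.
Hypothesis Hsum : (\dim (derived br :&: even_part V0 V1) + \dim (derived br :&: odd_part V0 V1) = 1)%N.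
Hypothesis Hdim : (2 < \dim (fullv : {vspace V0 * V1}) - \dim (centre br))%N.

Lemma lemA kb : exists a b, [/\ br kb a = 0, br kb b = 0 & br a b != 0].
Proof.
apply: NNPP => Hn.
have H : forall a b, br kb a = 0 -> br kb b = 0 -> br a b = 0.
  move=> a b ha hb; case: (eqVneq (br a b) 0) => // hab; exfalso; apply: Hn.
  by exists a, b.
have dD : (\dim (derived br) <= 1)%N by have := dim_derived Hl; rewrite Hsum.
set n := \dim (fullv : {vspace V0 * V1}).
have kerge : forall f : 'End((V0 * V1)%type), (limg f <= derived br)%VS -> (n <= \dim (lker f) + 1)%N.
  move=> f hf; have e := limg_ker_dim f fullv; rewrite capfv in e.
  by rewrite /n -e leq_add2l; exact: leq_trans (dimvS hf) dD.
set W := lker (adl br kb).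
have hW : (n <= \dim W + 1)%N.
  apply: kerge; apply/subvP => v /memv_imgP [u _ ->]; rewrite (adlE Hl); exact: (mem_derived Hl).
case: (boolP (fullv <= W)%VS) => [hf | /subvPn [u _ uW]].
  have D0 : (derived br <= 0)%VS.
    apply: derived_sub => x y; rewrite memv0; apply/eqP; apply: H.
      by have := subvP hf x (memvf x); rewrite memv_ker (adlE Hl) => /eqP.
    by have := subvP hf y (memvf y); rewrite memv_ker (adlE Hl) => /eqP.
  have := dimvS D0; rewrite dimv0.
  have := dimvS (capvSl (derived br) (even_part V0 V1)).
  have := dimvS (capvSl (derived br) (odd_part V0 V1)).
  move: Hsum; lia.
set K := lker (adr br u).
have hK : (n <= \dim K + 1)%N.
  apply: kerge; apply/subvP => v /memv_imgP [w _ ->]; rewrite (adrE Hl); exact: (mem_derived Hl).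
have hWK : (n <= \dim (W :&: K) + 2)%N.
  have := dimv_sum_cap W K; have := dimvS (subvf (W + K)%VS); rewrite -/n; lia.
have W0Z : (W :&: K <= centre br)%VS.
  apply/subvP => x; rewrite memv_cap !memv_ker (adlE Hl) (adrE Hl) => /andP [/eqP hx /eqP hxu].
  apply: (centre_mem Hl) => y.
  set S := lker (adl br x).
  have WS : (W <= S)%VS.
    apply/subvP => w; rewrite !memv_ker !(adlE Hl) => /eqP hw; apply/eqP; exact: H hx hw.
  have uS : u \in S by rewrite memv_ker (adlE Hl) hxu.
  have [le eqE] := dimv_leqif_eq WS.
  have ne : \dim W != \dim S.
    rewrite eqE; apply/negP => /eqP e; by move: uS; rewrite -e (negbTE uW).
  have [le2 eqE2] := dimv_leqif_eq (subvf S).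
  have /eqP SF : S == fullv.
    rewrite -eqE2; rewrite -/n; move: le ne le2; rewrite -/n; lia.
  by have := memvf y; rewrite -SF memv_ker (adlE Hl) => /eqP.
have h2 : (n <= \dim (centre br) + 2)%N by apply: leq_trans hWK _; rewrite leq_add2r; exact: dimvS W0Z.
have := leq_sub2r (\dim (centre br)) h2; rewrite addnC addnK => h3.
by have := leq_trans Hdim h3; rewrite ltnn.
Qed.

End LemA.

Section Lift.
Variables (F : fieldType) (H0 H1 V0 V1 : lmodType F) (f : H0 * H1 -> V0 * V1).
Hypothesis flin : forall (a : F) x y, f (a *: x + y) = a *: f x + f y.
Hypothesis fhom : forall b x, homog b x -> homog b (f x).
Hypothesis fsurj : forall v, exists h, f h = v.

Lemma lift_homog b v : homog b v -> exists h, homog b h /\ f h = v.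
Proof.
move=> hv; have [h0 fh0] := fsurj v.
have hp := fhom (homogE h0); have hq := fhom (homogO h0).
have fs : f h0 = f (Ep h0) + f (Op h0) by rewrite {1}(pair_split h0) (linD flin).
case: b hv => hv.
- have e : Ep v = f (Ep h0) by rewrite -fh0 fs EpD (Ep_even hp) (Ep_odd hq) addr0.
  rewrite (Ep_odd hv) in e.
  by exists (Op h0); split; [exact: homogO | rewrite -fh0 fs -e add0r].
- have e : Op v = f (Op h0) by rewrite -fh0 fs OpD (Op_even hp) (Op_odd hq) add0r.
  rewrite (Op_even hv) in e.
  by exists (Ep h0); split; [exact: homogE | rewrite -fh0 fs -e addr0].
Qed.
End Lift.

Unset Implicit Arguments.

Theorem mainTheorem7 (F : fieldType) (V0 V1 : vectType F)
    (br : V0 * V1 -> V0 * V1 -> V0 * V1) :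
  (2%:R : F) != 0 -> (3%:R : F) != 0 ->
  is_lie_superalgebra br ->
  nilpotent br ->
  (\dim (derived br :&: even_part V0 V1) + \dim (derived br :&: odd_part V0 V1) = 1)%N ->
  (2 < \dim (fullv : {vspace V0 * V1}) - \dim (centre br))%N ->
  ~ capable br.
Proof.
move=> _ _ Hl _ Hsum Hdim [H0 [H1 [brH [f [HlH [flin fhom fbr fsurj fker]]]]]].
have [a0 [b0 [_ _ nz0]]] := lemA Hl Hsum Hdim 0.
have [al [be [x [y [hx hy _ _ nzxy]]]]] := split_nonzero Hl nz0.
have [xh [hxh fxh]] := lift_homog flin fhom fsurj hx.
have [yh [hyh fyh]] := lift_homog flin fhom fsurj hy.
set zh := brH xh yh.
have fzh : f zh = br x y by rewrite /zh fbr fxh fyh.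
have dD : (\dim (derived br) <= 1)%N by have := dim_derived Hl; rewrite Hsum.
have lineD : forall w, w \in derived br -> exists lam : F, w = lam *: br x y.
  move=> w wD; apply/vlineP.
  have sub : (<[br x y]> <= derived br)%VS by rewrite -memvE; exact: mem_derived.
  have [le eqE] := dimv_leqif_eq sub.
  have /eqP E : <[br x y]>%VS == derived br.
    by rewrite -eqE dim_vline nzxy; apply/eqP/anti_leq; rewrite dD andbT; by move: le; rewrite dim_vline nzxy.
  by rewrite E.
have claim : forall g k, homog g k -> brH k zh = 0.
  move=> g k hk; set kb := f k; have hkb : homog g kb := fhom _ _ hk.
  have [a [b [ka kb0 nzab]]] := lemA Hl Hsum Hdim kb.
  have [al' [be' [a' [b' [ha' hb' ea eb nz']]]]] := split_nonzero Hl nzab.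
  have ka' : br kb a' = 0.
    by have [e1 e2] := homog_ker Hl hkb ka; case: ea => ->.
  have kb' : br kb b' = 0.
    by have [e1 e2] := homog_ker Hl hkb kb0; case: eb => ->.
  have [ah [hah fah]] := lift_homog flin fhom fsurj ha'.
  have [bh [hbh fbh]] := lift_homog flin fhom fsurj hb'.
  have c1 : centralH brH (brH bh k).
    apply/fker; rewrite fbr fbh; exact: (br_anti0 Hl hkb hb' kb').
  have c2 : centralH brH (brH k ah).
    by apply/fker; rewrite fbr fah.
  have J := br_superjacobi HlH hah hbh hk.
  rewrite (central_r HlH _ c1) (central_r HlH _ c2) !scaler0 !add0r in J.
  have J' : brH k (brH ah bh) = 0.
    by move/eqP: J; rewrite scaler_eq0 signr_eq0 /= => /eqP.
  have [lam elam] := lineD _ (mem_derived Hl a' b').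
  have lam0 : lam != 0 by apply: contra nz'; rewrite elam => /eqP ->; rewrite scale0r.
  set c := brH ah bh - lam *: zh.
  have cc : centralH brH c.
    apply/fker; rewrite /c (linB flin) (linZ flin) fbr fah fbh fzh elam; exact: subrr.
  have eab : brH ah bh = lam *: zh + c by rewrite /c addrC subrK.
  rewrite eab (br_linr HlH) (central_r HlH _ cc) addr0 in J'.
  by move/eqP: J'; rewrite scaler_eq0 (negbTE lam0) /= => /eqP.
have hz : homog (al (+) be) zh := br_grade HlH hxh hyh.
have czh : centralH brH zh.
  apply: (central_homog HlH) => g k hk; exact: (br_anti0 HlH hk hz (claim g k hk)).
have : f zh = 0 by apply/fker.
by rewrite fzh; apply/eqP.
Qed.
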